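(* Let $\Gamma$ be a connected signed graph with $n$ vertices and $m$ edges, with Laplacian eigenvalues $\mu_1\ge\cdots\ge\mu_n\ge 0$. Let $p$ be a positive integer and $k\in\{p,p-1\}$. Then the adjacency spectrum of $S_p^k(\Gamma)$, as a multiset, is: if $\Gamma$ is balanced: $0$ with multiplicity $(p-1)n+(k+1)m+2$, together with $\pm\sqrt{(p+1)(k+1)\mu_i}$ for $i=1,\dots,n-1$; if $\Gamma$ is unbalanced: $0$ with multiplicity $(p-1)n+(k+1)m$, together with $\pm\sqrt{(p+1)(k+1)\mu_i}$ for $i=1,\dots,n$.
   Context: A signed graph $\Gamma=(G,\sigma)$ is a simple graph $G$ with a sign function $\sigma:E(G)\to\{1,-1\}$; its adjacency matrix $A(\Gamma)$ has $(i,j)$ entry $\sigma(v_iv_j)$ if $v_iv_j\in E(G)$ and $0$ otherwise, and its Laplacian matrix is $L(\Gamma)=D(G)-A(\Gamma)$ with $D(G)$ the diagonal degree matrix. $\Gamma$ is balanced if every cycle has an even number of negative edges, unbalanced otherwise. Orientation: for $\Gamma$ with vertices $v_1,\dots,v_n$ and edges $e_1,\dots,e_m$, fix $\vartheta(v,e)\in\{1,-1\}$ for each vertex $v$ incident with edge $e$, such that for every edge $e=vw$, $\vartheta(v,e)\vartheta(w,e)=-\sigma(e)$. The signed graph $S_p^k(\Gamma)$ (for integers $p\ge1$, $k\ge 0$): its vertex set is $\{v_i^{(s)}:1\le i\le n,\ 0\le s\le p\}\cup\{e_j^{(t)}:1\le j\le m,\ 0\le t\le k\}$; its edges are exactly the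 pairs $v_i^{(s)}e_j^{(t)}$ with $v_i$ an end of $e_j$ in $G$, of sign $\vartheta(v_i,e_j)$. Equivalently, starting from the signed subdivision graph $S(\Gamma)$, one adds $p$ copies of each original vertex $v_i$ joined to the neighbours of $v_i$ with the same signs, and then $k$ copies of each edge-vertex $e_j$ joined to all (old and new) neighbours of $e_j$ with the same signs. It has $(p+1)n+(k+1)m$ vertices and $2(p+1)(k+1)m$ edges. *)

(* Defs.v *)
From mathcomp Require Import all_boot all_order all_algebra.
Set Implicit Arguments. Unset Strict Implicit. Unset Printing Implicit Defensive.
Import Order.TTheory GRing.Theory Num.Theory.
Local Open Scope ring_scope.

Section SignedGraph.
Variables (n m : nat) (ends : 'I_m -> 'I_n * 'I_n) (sigma : 'I_m -> int).

Definition joins (e : 'I_m) (i j : 'I_n) : bool :=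
  (((ends e).1 == i) && ((ends e).2 == j)) || (((ends e).1 == j) && ((ends e).2 == i)).

Definition incident (v : 'I_n) (e : 'I_m) : bool :=
  (v == (ends e).1) || (v == (ends e).2).

Definition is_signed_simple_graph : Prop :=
  (forall e, (ends e).1 != (ends e).2) /\
  (forall e f, joins e (ends f).1 (ends f).2 -> e = f) /\
  (forall e, sigma e = 1 \/ sigma e = -1).

Definition adj_rel : rel 'I_n := fun i j => [exists e, joins e i j].

Definition sg_connected : Prop := forall i j : 'I_n, connect adj_rel i j.

Definition edge_sign (i j : 'I_n) : int :=
  match [pick e | joins e i j] with Some e => sigma e | None => 0 end.

Definition sg_adjacency (R : nzRingType) : 'M[R]_n :=
  \matrix_(i, j) (edge_sign i j)%:~R.

Definition sg_degree (i : 'I_n) : nat := #|[set e | incident i e]|.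

Definition sg_laplacian (R : nzRingType) : 'M[R]_n :=
  diag_mx (\row_i (sg_degree i)%:R) - sg_adjacency R.

Definition is_graph_cycle (s : seq 'I_n) : bool :=
  [&& uniq s, (3 <= size s)%N & cycle adj_rel s].

Definition cycle_neg_edges (s : seq 'I_n) : nat :=
  count (fun ij : 'I_n * 'I_n => edge_sign ij.1 ij.2 == -1) (zip s (rot 1 s)).

Definition sg_balanced : Prop :=
  forall s, is_graph_cycle s -> ~~ odd (cycle_neg_edges s).

(* orientation theta (values only relevant on incident pairs) *)
Definition is_orientation (theta : 'I_n -> 'I_m -> int) : Prop :=
  (forall v e, incident v e -> theta v e = 1 \/ theta v e = -1) /\
  (forall e, theta (ends e).1 e * theta (ends e).2 e = - sigma e).

(* vertices of S_p^k: v_i^(s), 0<=s<=p, and e_j^(t), 0<=t<=k *)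
Definition SV (p k : nat) : finType := ('I_n * 'I_p.+1 + 'I_m * 'I_k.+1)%type.

Definition SV_adj (theta : 'I_n -> 'I_m -> int) (p k : nat) (a b : SV p k) : int :=
  match a, b with
  | inl (i, _), inr (j, _) => if incident i j then theta i j else 0
  | inr (j, _), inl (i, _) => if incident i j then theta i j else 0
  | _, _ => 0
  end.

Definition Spk_adjacency (R : nzRingType) (theta : 'I_n -> 'I_m -> int) (p k : nat)
  : 'M[R]_#|SV p k| :=
  \matrix_(a, b) (SV_adj theta (enum_val a) (enum_val b))%:~R.

End SignedGraph.

(* Main.v *)
Require Import Defs.
From mathcomp Require Import all_boot all_order all_algebra.
From mathcomp Require Import zify ring lra.
Set Implicit Arguments. Unset Strict Implicit. Unset Printing Implicit Defensive.
Import Order.TTheory GRing.Theory Num.Theory.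
Local Open Scope ring_scope.

Lemma zip_take (S T : Type) i (s : seq S) (t : seq T) :
  zip (take i s) (take i t) = take i (zip s t).
Proof. by elim: s t i => [|x s IH] [|y t] [|i] //=; rewrite IH. Qed.

Lemma zip_drop (S T : Type) i (s : seq S) (t : seq T) :
  zip (drop i s) (drop i t) = drop i (zip s t).
Proof. by elim: s t i => [|x s IH] [|y t] [|i] //=; first [by rewrite IH | by case: (drop _ _)]. Qed.

Lemma zip_rot (S T : Type) i (s : seq S) (t : seq T) :
  size s = size t -> zip (rot i s) (rot i t) = rot i (zip s t).
Proof.
move=> Hst; rewrite /rot zip_cat ?size_drop ?Hst // zip_drop zip_take //.
Qed.

Lemma zip_rcons_l (S T : Type) (s : seq S) (t : seq T) a :
  size s = size t -> zip (rcons s a) t = zip s t.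
Proof. by elim: s t => [|x s IH] [|y t] //= [/IH ->]. Qed.

Lemma not_uniq_split (T : eqType) (c : seq T) :
  ~~ uniq c -> exists c1 y c2 c3, c = c1 ++ y :: c2 ++ y :: c3.
Proof.
elim: c => //= x s IH; rewrite negb_and negbK; case/orP => [xs | /IH [c1 [y [c2 [c3 ->]]]]].
  by case/splitPr: xs => c2 c3; exists [::], x, c2, c3.
by exists (x :: c1), y, c2, c3.
Qed.

Section Graph.
Variables (n m : nat) (ends : 'I_m -> 'I_n * 'I_n) (sigma : 'I_m -> int).
Hypothesis Hg : is_signed_simple_graph ends sigma.

Local Notation adj := (adj_rel ends).
Local Notation es := (edge_sign ends sigma).
Local Notation cne := (cycle_neg_edges ends sigma).

Lemma edge_sign_sym i j : es i j = es j i.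
Proof.
by rewrite /edge_sign (@eq_pick _ _ (fun e => joins ends e j i)) // => e; rewrite /joins orbC.
Qed.

Lemma adj_irr i : ~~ adj i i.
Proof.
apply/existsP => [[e]]; rewrite /joins orbb => /andP[/eqP a /eqP b].
by have := (Hg.1 e); rewrite a b eqxx.
Qed.

Lemma adj_sym i j : adj i j = adj j i.
Proof. by apply/existsP/existsP => [][e]; exists e; rewrite /joins orbC. Qed.

Lemma edge_signE e : es (ends e).1 (ends e).2 = sigma e.
Proof.
rewrite /edge_sign; case: pickP => [f Hf | /(_ e)]; last by rewrite /joins !eqxx.
by rewrite (Hg.2.1 f e Hf).
Qed.

Lemma cne_rot c i : cne (rot i c) = cne c.
Proof.
rewrite /cycle_neg_edges rot_rot zip_rot ?size_rot //.
by apply/permP; rewrite perm_rot.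
Qed.

Lemma cne_split y a b : cne (y :: a ++ y :: b) = (cne (y :: a) + cne (y :: b))%N.
Proof.
rewrite /cycle_neg_edges !rot1_cons.
have E2 : rcons (a ++ y :: b) y = rcons a y ++ rcons b y by rewrite rcons_cat /= cat_rcons.
rewrite E2 -cat_cons zip_cat ?size_rcons //.
by rewrite count_cat.
Qed.

Lemma cycle_split y a b : cycle adj (y :: a ++ y :: b) -> cycle adj (y :: a) /\ cycle adj (y :: b).
Proof.
rewrite /= rcons_cat cat_path /= rcons_path => /and3P[H1 H2 H3].
by rewrite rcons_path H1 H2 H3.
Qed.

Hypothesis Hbal : sg_balanced ends sigma.

Lemma cycle_even N c : (size c <= N)%N -> cycle adj c -> ~~ odd (cne c).
Proof.
elim: N c => [|N IH] c; first by case: c.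
move=> Hsz Hcyc; case Hu: (uniq c).
  case: c Hsz Hcyc Hu => [|x [|y [|z t]]] Hsz Hcyc Hu; first by [].
  - by move: Hcyc; rewrite /= andbT (negbTE (adj_irr x)).
  - rewrite /cycle_neg_edges /= (edge_sign_sym y x).
    by case: (es x y == -1).
  - by apply: Hbal; rewrite /is_graph_cycle Hu Hcyc.
have [c1 [y [c2 [c3 Ec]]]] := not_uniq_split (negbT Hu).
have Hr : rot (size c1) c = y :: c2 ++ y :: c3 ++ c1.
  by rewrite Ec rot_size_cat /= -catA.
rewrite -(cne_rot c (size c1)) Hr cne_split oddD.
rewrite -(rot_cycle (size c1)) Hr in Hcyc.
have [H1 H2] := cycle_split Hcyc.
have Hs : size c = (size c1 + size c2 + size c3).+2 by rewrite Ec size_cat /= size_cat /=; lia.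
rewrite (negbTE (IH _ _ H1)) ?(negbTE (IH _ _ H2)) //= ?size_cat /=.
all: rewrite Hs in Hsz; move: Hsz; clear; move: (size c1) (size c2) (size c3) => a b d; lia.
Qed.


Definition Drel : rel ('I_n * bool) :=
  fun a b => adj a.1 b.1 && (b.2 == a.2 (+) (es a.1 b.1 == -1)).

Lemma Drel_sym : symmetric Drel.
Proof.
move=> [x b] [y c]; rewrite /Drel /= adj_sym edge_sign_sym; congr (_ && _).
by apply/eqP/eqP => ->; rewrite addbK.
Qed.

Lemma walk_parity ps x b : path Drel (x, b) ps ->
  path adj x (map fst ps) /\
  (last (x, b) ps).2 = b (+) odd (count (fun ij : 'I_n * 'I_n => es ij.1 ij.2 == -1)
                                   (zip (x :: map fst ps) (map fst ps))).
Proof.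
elim: ps x b => [|[y c] ps IH] x b; first by rewrite /= addbF.
rewrite [path _ _ _]/= => /andP[/andP[/= Hxy /eqP Hc] Hp].
have [H1 H2] := IH _ _ Hp; split; first by rewrite Hxy.
by rewrite H2 Hc oddD addbA; case: (es x y == -1).
Qed.

Lemma closed_walk x b b' : connect Drel (x, b) (x, b') -> b' = b.
Proof.
case/connectP => ps Hp Hl.
have [Ha Hpar] := walk_parity Hp.
have Hlx : last x (map fst ps) = x by rewrite (last_map fst ps (x, b)) -Hl.
rewrite -[b']/((x, b').2) Hl Hpar.
move: (map fst ps) Ha Hlx => vs; case/lastP: vs => [|vs z] //= Ha; first by rewrite addbF.
rewrite last_rcons => Ez; rewrite Ez in Ha *.
have Hc : cycle adj (x :: vs) by [].
rewrite -/(rcons (x :: vs) x) zip_rcons_l ?size_rcons //.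
by rewrite -rot1_cons (negbTE (cycle_even (leqnn _) Hc)) addbF.
Qed.

Lemma lift_path ps x b0 : path adj x ps -> exists b, connect Drel (x, b0) (last x ps, b).
Proof.
elim: ps x b0 => [|y ps IH] x b0 /=; first by exists b0; exact: connect0.
case/andP => Hxy Hp; have [b Hc] := IH y (b0 (+) (es x y == -1)) Hp.
exists b; apply: connect_trans Hc; apply: connect1.
by rewrite /Drel /= Hxy eqxx.
Qed.

Lemma switching (Hc : sg_connected ends) (r : 'I_n) :
  exists f : 'I_n -> bool, forall e, f (ends e).1 (+) f (ends e).2 = (sigma e == -1).
Proof.
pose f v := connect Drel (r, false) (v, true).
have Hsym : connect_sym Drel by apply: sym_connect_sym; exact: Drel_sym.
have Hu v b1 b2 : connect Drel (r, false) (v, b1) -> connect Drel (r, false) (v, b2) -> b2 = b1.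
  move=> H1 H2; apply: closed_walk; apply: connect_trans H2.
  by rewrite Hsym.
have Hf v : connect Drel (r, false) (v, f v).
  have [b Hb] : exists b, connect Drel (r, false) (v, b).
    by case/connectP: (Hc r v) => ps Hp ->; exact: lift_path.
  rewrite /f; case: (boolP (connect Drel (r, false) (v, true))) => // Hn.
  by case: b Hb => // Hb; rewrite Hb in Hn.
exists f => e.
have Hes := edge_signE e.
have Hj : adj (ends e).1 (ends e).2 by apply/existsP; exists e; rewrite /joins !eqxx.
have : connect Drel (r, false) ((ends e).2, f (ends e).1 (+) (sigma e == -1)).
  apply: connect_trans (Hf (ends e).1) (connect1 _).
  by rewrite /Drel /= Hes Hj eqxx.
move/(Hu _ _ _ (Hf _)) => <-.
by rewrite addKb.
Qed.

End Graph.

Lemma sylv (T : comNzRingType) a b (x : T) (U : 'M[T]_(a, b)) (V : 'M[T]_(b, a)) :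
  x ^+ b * \det (x%:M - U *m V) = x ^+ a * \det (x%:M - V *m U).
Proof.
have E1 : block_mx x%:M U V 1%:M *m block_mx 1%:M 0 (-V) 1%:M =
          block_mx (x%:M - U *m V) U 0 1%:M.
  by rewrite mulmx_block !mulmx1 !mulmx0 !mul1mx mulmxN !add0r addrN.
have E2 : block_mx 1%:M 0 (-V) x%:M *m block_mx x%:M U V 1%:M =
          block_mx x%:M U 0 (x%:M - V *m U).
  rewrite mulmx_block !mulmx1 !mul1mx !mul0mx !addr0 mulNmx.
  by rewrite !mulNmx mul_mx_scalar mul_scalar_mx addNr addrC.
have d1 := congr1 determinant E1; have d2 := congr1 determinant E2.
rewrite det_mulmx det_lblock !det1 mulr1 det_ublock det1 mulr1 in d1.
rewrite det_mulmx det_lblock det1 mul1r det_scalar det_ublock det_scalar in d2.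
by rewrite mulr1 in d1; rewrite -d1.
Qed.

Lemma sylv2 (T : comNzRingType) a b (x : T) (U : 'M[T]_(a, b)) (V : 'M[T]_(b, a)) :
  x ^+ a * \det (block_mx x%:M U V x%:M) = x ^+ b * \det ((x * x)%:M - U *m V).
Proof.
have E : block_mx x%:M U V x%:M *m block_mx x%:M 0 (-V) 1%:M =
         block_mx ((x * x)%:M - U *m V) U 0 x%:M.
  rewrite mulmx_block !mulmx1 !mulmx0 !add0r mulmxN.
  congr block_mx; first by rewrite scalar_mxM.
  by rewrite mul_mx_scalar mul_scalar_mx scalerN addrN.
have d := congr1 determinant E.
rewrite det_mulmx det_lblock det1 det_scalar det_ublock det_scalar in d.
by rewrite mulr1 mulrC in d; rewrite d mulrC.
Qed.

Lemma sum_deltal (T : nzSemiRingType) N (x : 'I_N) (F : 'I_N -> T) :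
  \sum_(c < N) (x == c)%:R * F c = F x.
Proof.
rewrite (bigD1 x) //= eqxx mul1r big1 ?addr0 // => c /negbTE.
by rewrite eq_sym => ->; rewrite mul0r.
Qed.

Lemma sum_deltar (T : nzSemiRingType) N (x : 'I_N) (F : 'I_N -> T) :
  \sum_(c < N) F c * (x == c)%:R = F x.
Proof.
rewrite (bigD1 x) //= eqxx mulr1 big1 ?addr0 // => c /negbTE.
by rewrite eq_sym => ->; rewrite mulr0.
Qed.

Lemma split_lshift a b (i : 'I_a) : split (lshift b i) = inl i.
Proof. exact: (unsplitK (inl _ i)). Qed.
Lemma split_rshift a b (i : 'I_b) : split (rshift a i) = inr i.
Proof. exact: (unsplitK (inr _ i)). Qed.

Section Spk.
Variables (R : rcfType) (n m : nat) (ends : 'I_m -> 'I_n * 'I_n)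
  (sigma : 'I_m -> int) (theta : 'I_n -> 'I_m -> int) (p k : nat).

Definition Rinc : 'M[R]_(n, m) :=
  \matrix_(i, j) (if incident ends i j then theta i j else 0)%:~R.

Definition phiSV (v : SV n m p k) : 'I_(n + m) :=
  match v with inl (i, _) => lshift m i | inr (j, _) => rshift n j end.

Definition Pm : 'M[R]_(#|SV n m p k|, n + m) :=
  \matrix_(a, c) (phiSV (enum_val a) == c)%:R.

Definition A0 : 'M[R]_(n + m) := block_mx 0 Rinc Rinc^T 0.

Lemma adjE : Spk_adjacency ends R theta p k = Pm *m (A0 *m Pm^T).
Proof.
apply/matrixP => a b; rewrite !mxE.
under eq_bigr do rewrite !mxE.
rewrite sum_deltal.
under eq_bigr do rewrite !mxE.
rewrite sum_deltar.
case: (enum_val a) => [[i s]|[j t]]; case: (enum_val b) => [[i' s']|[j' t']] /=;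
  by rewrite ?split_lshift ?split_rshift ?row_mxEl ?row_mxEr !mxE.
Qed.

Lemma PtP : Pm^T *m Pm = block_mx (p.+1)%:R%:M 0 0 (k.+1)%:R%:M.
Proof.
apply/matrixP => c d; rewrite !mxE.
under eq_bigr do rewrite !mxE.
rewrite -(big_enum_val (fun v => (phiSV v == c)%:R * (phiSV v == d)%:R)).
rewrite big_sumType /=.
rewrite (eq_bigr (fun q => (lshift m q.1 == c)%:R * (lshift m q.1 == d)%:R)); last by case.
rewrite (eq_bigr (fun q => (rshift n q.1 == c)%:R * (rshift n q.1 == d)%:R)); last by case.
rewrite -(pair_bigA _ (fun i (s : 'I_p.+1) => (lshift m i == c)%:R * (lshift m i == d)%:R)).
rewrite -(pair_bigA _ (fun i (s : 'I_k.+1) => (rshift n i == c)%:R * (rshift n i == d)%:R)).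
under eq_bigr do rewrite sumr_const card_ord.
under [X in _ + X]eq_bigr do rewrite sumr_const card_ord.
rewrite -(splitK c) -(splitK d); case: (split c) => c'; case: (split d) => d' /=;
  rewrite ?split_lshift ?split_rshift ?row_mxEl ?row_mxEr !mxE.
all: under eq_bigr => i _ do rewrite !eq_shift -mulrnAr ?(eq_sym i).
all: under [X in _ + X]eq_bigr => i _ do rewrite !eq_shift -mulrnAr ?(eq_sym i).
all: rewrite ?sum_deltal /= ?mul0r ?mulr0 ?big1 ?add0r ?addr0 //; try by move=> *; rewrite mul0r.
all: rewrite ?mul0rn // eq_sym; by case: (c' == d'); rewrite ?mulr1n ?mulr0n ?mul0rn.
Qed.

Lemma inc_both i j f : i != j ->
  (incident ends i f && incident ends j f) = joins ends f i j.
Proof.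
rewrite /incident /joins => Hij; apply/idP/idP; last first.
  by case/orP => /andP[/eqP <- /eqP <-]; rewrite !eqxx ?orbT.
case/andP => /orP[] /eqP Hi /orP[] /eqP Hj; subst i j;
  rewrite ?eqxx ?orbT //; by rewrite eqxx in Hij.
Qed.

Lemma joins_uniq (Hg : is_signed_simple_graph ends sigma) e f i j :
  joins ends e i j -> joins ends f i j -> f = e.
Proof.
move=> Hje Hjf; apply: Hg.2.1.
by case/orP: Hje => /andP[/eqP -> /eqP ->] //; rewrite /joins orbC.
Qed.

Lemma LE (Hg : is_signed_simple_graph ends sigma) (Ho : is_orientation ends sigma theta) :
  sg_laplacian ends sigma R = Rinc *m Rinc^T.
Proof.
apply/matrixP => i j; rewrite !mxE.
under eq_bigr do rewrite !mxE.
case: (eqVneq i j) => [<-|Hij].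
  have -> : edge_sign ends sigma i i = 0.
    rewrite /edge_sign; case: pickP => // e; rewrite /joins orbb => /andP[/eqP a /eqP b].
    by have := Hg.1 e; rewrite a b eqxx.
  rewrite mulr1n mulr0z subr0.
  rewrite (eq_bigr (fun e => if incident ends i e then 1 else 0)); last first.
    move=> e _; case Hie: (incident ends i e) => /=; last by rewrite mulr0.
    by rewrite -intrM; case: (Ho.1 i e Hie) => ->.
  rewrite -big_mkcond /= sumr_const /sg_degree cardsE.
  done.
rewrite mulr0n sub0r.
rewrite (eq_bigr (fun f => if joins ends f i j then (theta i f * theta j f)%:~R else 0)); last first.
  move=> f _; rewrite -(inc_both f Hij).
  by case: (incident ends i f); case: (incident ends j f) => //=; rewrite ?mulr0 ?mul0r ?intrM.
rewrite /edge_sign; case: pickP => [e He | Hn]; last first.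
  by rewrite big1 ?oppr0 // => f _; rewrite Hn.
rewrite (bigD1 e) //= He big1 ?addr0; last first.
  move=> f /negbTE Hfe; case Hf: (joins ends f i j) => //.
  by rewrite (joins_uniq Hg He Hf) eqxx in Hfe.
rewrite -mulrNz; congr (_%:~R).
have := Ho.2 e.
case/orP: He => /andP[/eqP E1 /eqP E2]; rewrite E1 E2 ?(mulrC (theta j e)) => ->.
all: done.
Qed.

Lemma charA (Hg : is_signed_simple_graph ends sigma) (Ho : is_orientation ends sigma theta)
  (Hp : (0 < p)%N) :
  char_poly (Spk_adjacency ends R theta p k) =
  'X ^+ ((p - 1) * n + k.+1 * m) *
  \det (('X * 'X)%:M - map_mx polyC ((p.+1 * k.+1)%:R *: sg_laplacian ends sigma R)).
Proof.
have HN : #|SV n m p k| = (p.+1 * n + k.+1 * m)%N by rewrite /SV card_sum !card_prod !card_ord; lia.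
rewrite /char_poly /char_poly_mx adjE map_mxM.
set U := map_mx polyC Pm; set V := map_mx polyC (A0 *m Pm^T).
have H1 := sylv 'X U V.
have HB : 'X%:M - V *m U = block_mx 'X%:M (- map_mx polyC ((k.+1)%:R *: Rinc))
              (- map_mx polyC ((p.+1)%:R *: Rinc^T)) 'X%:M.
  rewrite /U /V -map_mxM -mulmxA PtP mulmx_block !mulmx0 !mul0mx !addr0 !add0r.
  rewrite !mul_mx_scalar map_block_mx !map_mx0 scalar_mx_block opp_block_mx add_block_mx.
  by rewrite !subr0 !sub0r.
rewrite HB in H1.
have H2 := sylv2 'X (- map_mx polyC ((k.+1)%:R *: Rinc)) (- map_mx polyC ((p.+1)%:R *: Rinc^T)).
rewrite mulNmx mulmxN opprK -map_mxM -scalemxAl -scalemxAr scalerA -(LE Hg Ho) in H2.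
rewrite -natrM mulnC in H2.
apply: (mulfI (x := 'X ^+ (n + (n + m)))); first by rewrite expf_neq0 // polyX_eq0.
rewrite exprD -mulrA H1 mulrCA H2 mulrA -!exprD mulrA -!exprD HN.
congr ('X ^+ _ * _); case: p Hp => // p' _; rewrite subn1 /=; lia.
Qed.

End Spk.

Lemma detQ (R : rcfType) n (L : 'M[R]_n) (c : R) (mu : 'I_n -> R) : c != 0 ->
  char_poly L = \prod_(i < n) ('X - (mu i)%:P) ->
  \det (('X * 'X)%:M - map_mx polyC (c *: L)) = \prod_(i < n) ('X * 'X - (c * mu i)%:P).
Proof.
move=> Hc HL; set q := (c^-1)%:P * ('X * 'X).
have hc : c%:P * (c^-1)%:P = 1 by rewrite -polyCM mulfV.
have E : ('X * 'X)%:M - map_mx polyC (c *: L) = c%:P *: map_mx (comp_poly q) (char_poly_mx L).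
  apply/matrixP => i j; rewrite !mxE rmorphB /= rmorphMn /= comp_polyX comp_polyC.
  by rewrite mulrBr /q mulrnAr [c%:P * (_ * _)]mulrA hc mul1r polyCM.
rewrite E detZ det_map_mx -/(char_poly L) HL rmorph_prod.
rewrite -{1}(card_ord n) -prodr_const -big_split; apply: eq_bigr => i _ /=.
by rewrite comp_polyB comp_polyX comp_polyC /q mulrBr [c%:P * (_ * _)]mulrA hc mul1r polyCM.
Qed.

Lemma mu_nonneg (R : rcfType) n m (Rm : 'M[R]_(n, m)) (mu : 'I_n -> R) :
  char_poly (Rm *m Rm^T) = \prod_(i < n) ('X - (mu i)%:P) -> forall i, 0 <= mu i.
Proof.
move=> HL i.
have : eigenvalue (Rm *m Rm^T) (mu i).
  rewrite eigenvalue_root_char HL /root horner_prod.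
  by apply/prodf_eq0; exists i => //; rewrite hornerXsubC subrr.
case/eigenvalueP => v Hv Hv0.
set w := v *m Rm.
have E : (w *m w^T) 0 0 = mu i * (v *m v^T) 0 0.
  by rewrite /w trmx_mul mulmxA -(mulmxA v) Hv -scalemxAl mxE.
have Hw : 0 <= (w *m w^T) 0 0.
  by rewrite mxE; apply: sumr_ge0 => j _; rewrite [w^T _ _]mxE -expr2 sqr_ge0.
have Hv2 : 0 < (v *m v^T) 0 0.
  case/matrix0Pn: Hv0 => a [b Hb]; rewrite (ord1 a) in Hb.
  rewrite mxE (bigD1 b) //= mxE.
  have h1 : 0 < v 0 b * v 0 b by rewrite -expr2 lt0r sqr_ge0 sqrf_eq0 Hb.
  have h2 : 0 <= \sum_(j < n | j != b) v 0 j * v^T j 0.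
    by apply: sumr_ge0 => j _; rewrite mxE -expr2 sqr_ge0.
  lra.
by rewrite -(pmulr_lge0 _ Hv2) -E.
Qed.

Lemma mu_zero (R : rcfType) n m (ends : 'I_m -> 'I_n * 'I_n) (sigma : 'I_m -> int)
  (theta : 'I_n -> 'I_m -> int) (mu : 'I_n -> R) :
  is_signed_simple_graph ends sigma -> (0 < n)%N -> sg_connected ends ->
  is_orientation ends sigma theta -> sg_balanced ends sigma ->
  char_poly (sg_laplacian ends sigma R) = \prod_(i < n) ('X - (mu i)%:P) ->
  exists i, mu i = 0.
Proof.
move=> Hg Hn Hc Ho Hbal HL.
set r : 'I_n := Ordinal Hn.
have [f Hf] := switching Hg Hbal Hc r.
pose s : 'rV[R]_n := \row_i (if f i then -1 else 1).
have Hs : s *m Rinc R ends theta = 0.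
  apply/matrixP => a e; rewrite !mxE.
  under eq_bigr do rewrite !mxE.
  have Huw : (ends e).1 != (ends e).2 := Hg.1 e.
  have Hu : incident ends (ends e).1 e by rewrite /incident eqxx.
  have Hw : incident ends (ends e).2 e by rewrite /incident eqxx orbT.
  rewrite (bigD1 (ends e).1) // (bigD1 (ends e).2) /=; last by rewrite eq_sym.
  rewrite big1 ?addr0; last first.
    by move=> i /andP[Hiw Hiu]; rewrite /incident (negbTE Hiu) (negbTE Hiw) mulr0.
  rewrite Hu Hw.
  have Hx := Hf e; have Ht := Ho.2 e.
  case: (Ho.1 _ e Hu) => Tu; case: (Ho.1 _ e Hw) => Tw; case: (Hg.2.2 e) => Ts;
    rewrite Tu Tw Ts in Ht Hx *; try by [];
    case: (f (ends e).1) (f (ends e).2) Hx => [] [] //= _;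
    rewrite ?mulN1r ?mul1r ?intrN ?opprK ?addrN ?addNr //.
have : eigenvalue (sg_laplacian ends sigma R) 0.
  apply/eigenvalueP; exists s.
    by rewrite (LE _ Hg Ho) mulmxA Hs mul0mx scale0r.
  apply/matrix0Pn; exists 0, r; rewrite mxE.
  by case: (f r); rewrite ?oppr_eq0 oner_eq0.
rewrite eigenvalue_root_char HL /root horner_prod.
case/prodf_eq0 => i _; rewrite hornerXsubC sub0r oppr_eq0 => /eqP Hi.
by exists i.
Qed.

Unset Implicit Arguments.

Theorem theorem4p4 (R : rcfType) (n m : nat) (ends : 'I_m -> 'I_n * 'I_n)
  (sigma : 'I_m -> int) (theta : 'I_n -> 'I_m -> int) (p k : nat)
  (mu : 'I_n -> R) :
  is_signed_simple_graph ends sigma ->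
  (0 < n)%N ->
  sg_connected ends ->
  is_orientation ends sigma theta ->
  (forall i j : 'I_n, (i <= j)%N -> mu j <= mu i) ->
  char_poly (sg_laplacian ends sigma R) = \prod_(i < n) ('X - (mu i)%:P) ->
  (0 < p)%N ->
  (k = p \/ k = p.-1) ->
  (sg_balanced ends sigma ->
     char_poly (Spk_adjacency ends R theta p k) =
     'X ^+ ((p - 1) * n + k.+1 * m + 2)%N *
     \prod_(i < n | (i < n.-1)%N)
        (('X - (Num.sqrt ((p.+1 * k.+1)%:R * mu i))%:P) *
         ('X + (Num.sqrt ((p.+1 * k.+1)%:R * mu i))%:P))) /\
  (~ sg_balanced ends sigma ->
     char_poly (Spk_adjacency ends R theta p k) =
     'X ^+ ((p - 1) * n + k.+1 * m)%N *
     \prod_(i < n)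
        (('X - (Num.sqrt ((p.+1 * k.+1)%:R * mu i))%:P) *
         ('X + (Num.sqrt ((p.+1 * k.+1)%:R * mu i))%:P))).
Proof.
move=> Hg Hn Hc Ho Hmono HL Hp _.
set c : R := (p.+1 * k.+1)%:R.
have Hc0 : c != 0 by rewrite /c pnatr_eq0.
have HA := @charA R n m ends sigma theta p k Hg Ho Hp.
rewrite (detQ Hc0 HL) in HA.
have Hmu0 : forall i, 0 <= mu i by apply: (@mu_nonneg R n m (Rinc R ends theta)); rewrite -(LE _ Hg Ho).
have Hf i : ('X - (Num.sqrt (c * mu i))%:P) * ('X + (Num.sqrt (c * mu i))%:P) =
            'X * 'X - (c * mu i)%:P.
  have -> : c * mu i = Num.sqrt (c * mu i) ^+ 2.
    by rewrite sqr_sqrtr // mulr_ge0 // ler0n.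
  rewrite sqrtr_sqr ger0_norm ?sqrtr_ge0 // rmorphXn /=; ring.
split=> Hbal; rewrite HA; last first.
  by congr (_ * _); apply: eq_bigr => i _; rewrite Hf.
have [i0 Hi0] := mu_zero Hg Hn Hc Ho Hbal HL.
have Hnl : (n.-1 < n)%N by rewrite prednK.
set il : 'I_n := Ordinal Hnl.
have Hl : mu il = 0.
  apply/le_anti; rewrite Hmu0 andbT -Hi0; apply: Hmono.
  by rewrite /il /= -ltnS prednK.
rewrite (bigD1 il) //= Hl mulr0 subr0.
rewrite (eq_bigl (fun i : 'I_n => (i < n.-1)%N)); last first.
  move=> i; rewrite -val_eqE /=; have := ltn_ord i; lia.
rewrite [in RHS]exprD -[in RHS]mulrA expr2; congr (_ * _).
by congr (_ * _); apply: eq_bigr => i _; rewrite Hf.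
Qed.
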